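(* Let $U,V$ be independent Bernoulli random variables with means $p,q\in(0,1]$. Suppose $X,Y$ are real random variables with finite second moments such that $X\perp\!\!\!\perp V\mid U$ and $Y\perp\!\!\!\perp U\mid V$. Then \[{\rm Cov}(UX,VY)=pq\cdot{\rm Cov}(X,Y\mid U=V=1).\]
   Context: $X\perp\!\!\!\perp V\mid U$ denotes conditional independence of $X$ and $V$ given $U$. ${\rm Cov}(X,Y\mid U=V=1)$ is the covariance of $X$ and $Y$ under the conditional law given the event $\{U=V=1\}$. *)

(* Defs.v *)
From HB Require Import structures.
From mathcomp Require Import all_boot all_order all_algebra.
From mathcomp Require Import all_classical all_reals all_analysis.
Set Implicit Arguments. Unset Strict Implicit. Unset Printing Implicit Defensive.
Import Order.TTheory GRing.Theory Num.Theory.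
Local Open Scope classical_set_scope.
Local Open Scope ring_scope.

Definition indep_rv {d} {T : measurableType d} {R : realType}
  (P : probability T R) (U V : T -> R) : Prop :=
  forall A B : set R, measurable A -> measurable B ->
    P (U @^-1` A `&` V @^-1` B) = (P (U @^-1` A) * P (V @^-1` B))%E.

Definition bernoulli_rv {d} {T : measurableType d} {R : realType}
  (P : probability T R) (U : T -> R) (p : R) : Prop :=
  [/\ measurable_fun setT U,
      P [set t | U t = 0 \/ U t = 1] = 1%E
    & P [set t | U t = 1] = p%:E].

(* Conditional independence of X and V given a discrete random variable U:
   for every value u, and all Borel A, B,
   P(X in A, V in B | U = u) = P(X in A | U = u) P(V in B | U = u),
   written in multiplied-out form (trivial when P(U = u) = 0). *)
Definition cond_indep_discrete {d} {T : measurableType d} {R : realType}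
  (P : probability T R) (X V U : T -> R) : Prop :=
  forall (u : R) (A B : set R), measurable A -> measurable B ->
    (P (X @^-1` A `&` V @^-1` B `&` [set t | U t = u]) * P [set t | U t = u])%E
    = (P (X @^-1` A `&` [set t | U t = u]) * P (V @^-1` B `&` [set t | U t = u]))%E.

Definition cond_expectation {d} {T : measurableType d} {R : realType}
  (P : probability T R) (E : set T) (X : T -> R) : \bar R :=
  ((fine (P E))^-1%:E * \int[P]_(w in E) (X w)%:E)%E.

Definition cond_covariance {d} {T : measurableType d} {R : realType}
  (P : probability T R) (E : set T) (X Y : T -> R) : \bar R :=
  (cond_expectation P E (X \* Y)%R
   - cond_expectation P E X * cond_expectation P E Y)%E.

(* Main.v *)
Require Import Defs.
From HB Require Import structures.
From mathcomp Require Import all_boot all_order all_algebra.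
From mathcomp Require Import all_classical all_reals all_analysis.
From mathcomp Require Import measurable_realfun.
From mathcomp Require Import ring.
Set Implicit Arguments. Unset Strict Implicit. Unset Printing Implicit Defensive.
Import Order.TTheory GRing.Theory Num.Theory.
Local Open Scope classical_set_scope.
Local Open Scope ring_scope.
Section restr.
Local Open Scope ereal_scope.
Context d (T : measurableType d) (R : realType).
Variables (m : {measure set T -> \bar R}) (F : set T) (mF : measurable F).
Import HBNNSimple.

Let restr_nnsfun (h : {nnsfun T >-> R}) :
  \int[mrestr m mF]_x (h x)%:E = \int[m]_(x in F) (h x)%:E.
Proof.
under [LHS]eq_integral do rewrite fimfunE -fsumEFin//.
rewrite [LHS]ge0_integral_fsum//; last 2 first.
  - by move=> r; exact/measurable_EFinP/measurableT_comp.
  - by move=> n x _; rewrite EFinM nnfun_muleindic_ge0.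
under [RHS]eq_integral do rewrite fimfunE -fsumEFin//.
rewrite [RHS]ge0_integral_fsum//; last 2 first.
  - by move=> r; exact/measurable_EFinP/measurableT_comp.
  - by move=> n x _; rewrite EFinM nnfun_muleindic_ge0.
apply: eq_fsbigr => r _.
rewrite !integralZl_indic_nnsfun// !integral_indic//=.
by rewrite /mrestr setIT.
Qed.

Lemma integral_mrestr (f : T -> \bar R) (mf : measurable_fun setT f) :
    (forall x, 0 <= f x) ->
  \int[mrestr m mF]_x f x = \int[m]_(x in F) f x.
Proof.
move=> f0; pose f_ := nnsfun_approx measurableT mf.
transitivity (limn (fun n => \int[mrestr m mF]_x (f_ n x)%:E)).
  rewrite -monotone_convergence//=.
  - apply: eq_integral => x _; apply/esym/cvg_lim => //=.
    exact: cvg_nnsfun_approx.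
  - by move=> n; exact/measurable_EFinP.
  - by move=> n x _; rewrite lee_fin.
  - by move=> x _ a b ab; rewrite lee_fin//; exact/lefP/nd_nnsfun_approx.
rewrite (_ : \int[m]_(x in F) _ =
    limn (fun n => \int[m]_(x in F) (f_ n x)%:E)); last first.
  rewrite -monotone_convergence//=.
  - apply: eq_integral => x _; apply/esym/cvg_lim => //.
    exact: cvg_nnsfun_approx.
  - by move=> n; exact/measurable_EFinP/measurable_funTS.
  - by move=> n x _; rewrite lee_fin.
  - by move=> x _ a b ab; rewrite lee_fin//; exact/lefP/nd_nnsfun_approx.
by congr (limn _); apply/funext => n /=; rewrite restr_nnsfun.
Qed.
End restr.
Section key.
Local Open Scope ereal_scope.
Context d (T : measurableType d) (R : realType).
Variables (m : {measure set T -> \bar R}) (F G : set T) (mF : measurable F) (mG : measurable G).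
Variables (X : T -> R) (mX : measurable_fun setT X) (a b : {nonneg R}).
Hypothesis hab : forall A, measurable A ->
  a%:num%:E * m (X @^-1` A `&` F) = b%:num%:E * m (X @^-1` A `&` G).

Lemma key_ge0 (f : R -> \bar R) : measurable_fun setT f -> (forall y, 0 <= f y) ->
  a%:num%:E * \int[m]_(x in F) f (X x) = b%:num%:E * \int[m]_(x in G) f (X x).
Proof.
move=> mf f0.
have mfX : measurable_fun setT (f \o X) by exact: measurableT_comp.
have eF : \int[m]_(x in F) f (X x) = \int[pushforward (mrestr m mF) X]_y f y.
  rewrite (ge0_integral_pushforward mX (mrestr m mF) measurableT mf (fun y _ => f0 y)).
  rewrite preimage_setT.
  by symmetry; apply: (integral_mrestr _ _ mfX (fun x => f0 (X x))).
have eG : \int[m]_(x in G) f (X x) = \int[pushforward (mrestr m mG) X]_y f y.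
  rewrite (ge0_integral_pushforward mX (mrestr m mG) measurableT mf (fun y _ => f0 y)).
  rewrite preimage_setT.
  by symmetry; apply: (integral_mrestr _ _ mfX (fun x => f0 (X x))).
rewrite eF eG -!ge0_integral_mscale//.
apply: eq_measure_integral => A mA _.
exact: hab.
Qed.

Lemma key_int : m.-integrable F (EFin \o X) -> m.-integrable G (EFin \o X) ->
  a%:num%:E * \int[m]_(x in F) (X x)%:E = b%:num%:E * \int[m]_(x in G) (X x)%:E.
Proof.
move=> iF iG.
have mp : measurable_fun setT (fun y : R => maxe y%:E 0).
  by apply: measurable_maxe.
have mn : measurable_fun setT (fun y : R => maxe (- y%:E) 0).
  apply: measurable_maxe => //.
  exact: measurableT_comp.
have kp := key_ge0 mp (fun y => ltac:(by rewrite le_max lexx orbT)).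
have kn := key_ge0 mn (fun y => ltac:(by rewrite le_max lexx orbT)).
rewrite integralE [in RHS]integralE.
have fF1 := integrable_fin_num mF (integrable_funepos mF iF).
have fG1 := integrable_fin_num mG (integrable_funepos mG iG).
rewrite muleBr ?fin_num_adde_defr// [in RHS]muleBr ?fin_num_adde_defr//.
congr (_ - _).
  under eq_integral do rewrite funeposE.
  under [in RHS]eq_integral do rewrite funeposE.
  exact: kp.
under eq_integral do rewrite funenegE.
under [in RHS]eq_integral do rewrite funenegE.
exact: kn.
Qed.
End key.
Section aux.
Local Open Scope ereal_scope.
Context d (T : measurableType d) (R : realType) (P : probability T R).

Lemma E_ae (f g : T -> R) : measurable_fun setT f -> measurable_fun setT g ->
  {ae P, forall x, f x = g x} -> 'E_P[f] = 'E_P[g].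
Proof.
move=> mf mg fg; rewrite expectation.unlock.
apply: ae_eq_integral => //; [exact/measurable_EFinP|exact/measurable_EFinP|].
by apply: filterS fg => x /= -> _.
Qed.

Lemma cov_ae (f1 f2 g1 g2 : T -> R) :
  measurable_fun setT f1 -> measurable_fun setT f2 ->
  measurable_fun setT g1 -> measurable_fun setT g2 ->
  {ae P, forall x, f1 x = g1 x} -> {ae P, forall x, f2 x = g2 x} ->
  covariance P f1 f2 = covariance P g1 g2.
Proof.
move=> m1 m2 n1 n2 e1 e2.
rewrite covariance.unlock (E_ae m1 n1 e1) (E_ae m2 n2 e2).
apply: E_ae.
- by apply: measurable_funM; apply: measurable_funB => //; exact: measurable_cst.
- by apply: measurable_funM; apply: measurable_funB => //; exact: measurable_cst.
- apply: filterS2 e1 e2 => x /= h1 h2. change ((f1 x - fine 'E_P[g1]) * (f2 x - fine 'E_P[g2]) = (g1 x - fine 'E_P[g1]) * (g2 x - fine 'E_P[g2]))%R. by rewrite h1 h2.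
Qed.

Lemma E_indic (S : set T) (f : T -> R) :
  'E_P[(\1_S \* f)%R] = \int[P]_(x in S) (f x)%:E.
Proof.
rewrite expectation.unlock [RHS]integral_mkcond; apply: eq_integral => x _.
rewrite /patch -[LHS]/(((x \in S)%:R * f x)%R%:E); case: ifP => _; by rewrite ?mul1r ?mul0r.
Qed.

Lemma E_indic2 (S1 S2 : set T) (f g : T -> R) :
  'E_P[((\1_S1 \* f) * (\1_S2 \* g))%R] = \int[P]_(x in S1 `&` S2) (f x * g x)%:E.
Proof.
rewrite expectation.unlock [RHS]integral_mkcond; apply: eq_integral => x _.
rewrite /patch in_setI -[LHS]/((((x \in S1)%:R * f x) * ((x \in S2)%:R * g x))%R%:E).
by case: (x \in S1); case: (x \in S2) => /=; rewrite ?mul1r ?mul0r ?mulr0.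
Qed.
End aux.

Theorem mainTheorem11 (d : measure_display) (T : measurableType d) (R : realType)
  (P : probability T R) (U V X Y : T -> R) (p q : R) :
  0 < p <= 1 -> 0 < q <= 1 ->
  bernoulli_rv P U p -> bernoulli_rv P V q -> indep_rv P U V ->
  X \in Lfun P 2%:E -> Y \in Lfun P 2%:E ->
  cond_indep_discrete P X V U -> cond_indep_discrete P Y U V ->
  covariance P (U \* X)%R (V \* Y)%R
  = ((p * q)%:E * cond_covariance P [set t | U t = 1%R /\ V t = 1%R] X Y)%E.
Proof.
move=> /andP[p0 p1] /andP[q0 q1] [mU PU01 PU1] [mV PV01 PV1] UV X2 Y2 ciX ciY.
have mX : measurable_fun setT X.
  by move: (X2) => /[!inE] /andP[/[!inE]/= mf _].
have mY : measurable_fun setT Y.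
  by move: (Y2) => /[!inE] /andP[/[!inE]/= mf _].
have X1 : X \in Lfun P 1 by apply: (Lfun_subset12 _ X2); rewrite fin_num_measure.
have Y1 : Y \in Lfun P 1 by apply: (Lfun_subset12 _ Y2); rewrite fin_num_measure.
have iX : P.-integrable setT (EFin \o X) by apply/Lfun1_integrable.
have iY : P.-integrable setT (EFin \o Y) by apply/Lfun1_integrable.
have XY1 : (X \* Y)%R \in Lfun P 1 := Lfun2_mul_Lfun1 X2 Y2.
have iXY : P.-integrable setT (EFin \o (X \* Y)%R) by apply/Lfun1_integrable.
pose S1 := [set t | U t = 1%R]; pose S2 := [set t | V t = 1%R].
have mS1 : measurable S1 by have := mU measurableT _ (measurable_set1 1%R); rewrite setTI.
have mS2 : measurable S2 by have := mV measurableT _ (measurable_set1 1%R); rewrite setTI.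
change [set t | U t = 1%R /\ V t = 1%R] with (S1 `&` S2).
set E := S1 `&` S2.
have mE : measurable E := measurableI _ _ mS1 mS2.
have PE : P E = (p * q)%:E.
  by rewrite EFinM -PU1 -PV1; exact: (UV [set 1%R] [set 1%R] (measurable_set1 _) (measurable_set1 _)).
have aeU : {ae P, forall x, U x = \1_S1 x}.
  exists (~` [set t | U t = 0%R \/ U t = 1%R]); split.
  - apply: measurableC.
    have := mU measurableT _ (measurableU _ _ (measurable_set1 0%R) (measurable_set1 1%R)).
    by rewrite setTI.
  - rewrite probability_setC ?PU01 ?subee//.
    have := mU measurableT _ (measurableU _ _ (measurable_set1 0%R) (measurable_set1 1%R)).
    by rewrite setTI.
  - move=> x /= hx Ux; apply: hx; rewrite /indic.
    have [xS|xS] := boolP (x \in S1).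
      by move: xS; rewrite inE /= => ->.
    move: xS; rewrite notin_setE /S1 /= => xS.
    by case: Ux => // ->.
have aeV : {ae P, forall x, V x = \1_S2 x}.
  exists (~` [set t | V t = 0%R \/ V t = 1%R]); split.
  - apply: measurableC.
    have := mV measurableT _ (measurableU _ _ (measurable_set1 0%R) (measurable_set1 1%R)).
    by rewrite setTI.
  - rewrite probability_setC ?PV01 ?subee//.
    have := mV measurableT _ (measurableU _ _ (measurable_set1 0%R) (measurable_set1 1%R)).
    by rewrite setTI.
  - move=> x /= hx Vx; apply: hx; rewrite /indic.
    have [xS|xS] := boolP (x \in S2).
      by move: xS; rewrite inE /= => ->.
    move: xS; rewrite notin_setE /S2 /= => xS.
    by case: Vx => // ->.
have m1 : measurable_fun setT (\1_S1 : T -> R) by exact: measurable_indic.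
have m2 : measurable_fun setT (\1_S2 : T -> R) by exact: measurable_indic.
rewrite (@cov_ae _ _ _ P (U \* X)%R (V \* Y)%R (\1_S1 \* X)%R (\1_S2 \* Y)%R); first last.
- apply: filterS aeV => x h.
  by rewrite -[LHS]/(V x * Y x)%R -[RHS]/(\1_S2 x * Y x)%R h.
- apply: filterS aeU => x h.
  by rewrite -[LHS]/(U x * X x)%R -[RHS]/(\1_S1 x * X x)%R h.
- exact: measurable_funM.
- exact: measurable_funM.
- exact: measurable_funM.
- exact: measurable_funM.
have L1X : (\1_S1 \* X)%R \in Lfun P 1.
  apply/Lfun1_integrable; apply: le_integrable iX => //.
    by apply/measurable_EFinP; exact: measurable_funM.
  move=> x _ /=; rewrite lee_fin /indic.
  by case: (x \in S1); rewrite ?mul1r ?mul0r ?normr0.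
have L1Y : (\1_S2 \* Y)%R \in Lfun P 1.
  apply/Lfun1_integrable; apply: le_integrable iY => //.
    by apply/measurable_EFinP; exact: measurable_funM.
  move=> x _ /=; rewrite lee_fin /indic.
  by case: (x \in S2); rewrite ?mul1r ?mul0r ?normr0.
have L1XY : ((\1_S1 \* X) * (\1_S2 \* Y))%R \in Lfun P 1.
  apply/Lfun1_integrable; apply: le_integrable iXY => //.
    by apply/measurable_EFinP; apply: measurable_funM; exact: measurable_funM.
  move=> x _ /=; rewrite lee_fin.
  rewrite -[((\1_S1 \* X) * (\1_S2 \* Y))%R x]/((\1_S1 x * X x) * (\1_S2 x * Y x))%R /indic.
  by case: (x \in S1); case: (x \in S2); rewrite ?mul1r ?mul0r ?mulr0 ?normr0.
rewrite covarianceE // E_indic2 !E_indic.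
rewrite /cond_covariance /cond_expectation PE /=.
have p0' : (0 <= p)%R := ltW p0.
have pq0 : (0 <= p * q)%R by rewrite mulr_ge0// ltW.
have q0' : (0 <= q)%R := ltW q0.
have habX : forall A, measurable A ->
    ((NngNum p0')%:num%:E * P (X @^-1` A `&` E) = (NngNum pq0)%:num%:E * P (X @^-1` A `&` S1))%E.
  move=> A mA /=.
  have := ciX 1%R A [set 1%R] mA (measurable_set1 _).
  rewrite -/S1.
  have -> : X @^-1` A `&` V @^-1` [set 1%R] `&` S1 = X @^-1` A `&` E.
    by apply/seteqP; split => t /=; rewrite /E /S1 /S2 /=; tauto.
  have -> : V @^-1` [set 1%R] `&` S1 = E by rewrite setIC.
  by rewrite PE PU1 => h; rewrite muleC h muleC.
have habY : forall A, measurable A ->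
    ((NngNum q0')%:num%:E * P (Y @^-1` A `&` E) = (NngNum pq0)%:num%:E * P (Y @^-1` A `&` S2))%E.
  move=> A mA /=.
  have := ciY 1%R A [set 1%R] mA (measurable_set1 _).
  rewrite -/S2.
  have -> : Y @^-1` A `&` U @^-1` [set 1%R] `&` S2 = Y @^-1` A `&` E.
    by apply/seteqP; split => t /=; rewrite /E /S1 /S2 /=; tauto.
  have -> : U @^-1` [set 1%R] `&` S2 = E by [].
  by rewrite PE PV1 => h; rewrite muleC h muleC.
have iXE : P.-integrable E (EFin \o X) := integrableS measurableT mE (@subsetT _ _) iX.
have iXS1 : P.-integrable S1 (EFin \o X) := integrableS measurableT mS1 (@subsetT _ _) iX.
have iYE : P.-integrable E (EFin \o Y) := integrableS measurableT mE (@subsetT _ _) iY.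
have iYS2 : P.-integrable S2 (EFin \o Y) := integrableS measurableT mS2 (@subsetT _ _) iY.
have iXYE : P.-integrable E (EFin \o (X \* Y)%R) := integrableS measurableT mE (@subsetT _ _) iXY.
have kX := key_int mE mS1 mX habX iXE iXS1.
have kY := key_int mE mS2 mY habY iYE iYS2.
rewrite /= in kX kY.
have [xE hxE] : exists r, (\int[P]_(w in E) (X w)%:E = r%:E)%E.
  by exists (fine (\int[P]_(w in E) (X w)%:E)%E); rewrite fineK//; exact: integrable_fin_num iXE.
have [x1 hx1] : exists r, (\int[P]_(w in S1) (X w)%:E = r%:E)%E.
  by exists (fine (\int[P]_(w in S1) (X w)%:E)%E); rewrite fineK//; exact: integrable_fin_num iXS1.
have [yE hyE] : exists r, (\int[P]_(w in E) (Y w)%:E = r%:E)%E.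
  by exists (fine (\int[P]_(w in E) (Y w)%:E)%E); rewrite fineK//; exact: integrable_fin_num iYE.
have [y2 hy2] : exists r, (\int[P]_(w in S2) (Y w)%:E = r%:E)%E.
  by exists (fine (\int[P]_(w in S2) (Y w)%:E)%E); rewrite fineK//; exact: integrable_fin_num iYS2.
have [c hc] : exists r, (\int[P]_(w in E) (X w * Y w)%:E = r%:E)%E.
  by exists (fine (\int[P]_(w in E) (X w * Y w)%:E)%E); rewrite fineK//; exact: integrable_fin_num iXYE.
rewrite -/E hxE hx1 hyE hy2 hc in kX kY *.
have hX : p * xE = p * q * x1 by apply: EFin_inj; rewrite [LHS]EFinM kX -EFinM.
have hY : q * yE = p * q * y2 by apply: EFin_inj; rewrite [LHS]EFinM kY -EFinM.
rewrite -!EFinM -!EFinB; congr EFin.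
have pn0 : p != 0 by rewrite gt_eqF.
have qn0 : q != 0 by rewrite gt_eqF.
have -> : x1 = xE / q.
  apply: (mulfI pn0); apply: (mulfI qn0).
  by rewrite mulrA [q * p]mulrC -hX; field.
have -> : y2 = yE / p.
  apply: (mulfI pn0); apply: (mulfI qn0).
  by rewrite mulrA [q * p]mulrC -hY; field.
change (c - xE / q * (yE / p) = p * q * ((p * q)^-1 * c - (p * q)^-1 * xE * ((p * q)^-1 * yE))).
by field; rewrite pn0 qn0.
Qed.
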